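(* Let $a\in\mathbb{C}$ and let $\mathcal{DC}_a=\{(z,\,az+\tfrac{1}{z})\in\mathbb{C}^2 : z\in\mathbb{C}\setminus\{0\}\}\subset\mathbb{C}^2\cong\mathbb{R}^4$. Then the only smooth simple closed curves on $\mathcal{DC}_a$ that lie in a $2$-dimensional affine plane of $\mathbb{R}^4$ are the images of the circles $\{z=re^{i\theta}: 0\le\theta\le 2\pi\}$, $r>0$, under the map $z\mapsto (z,az+1/z)$.
   Context: $\mathbb{C}^2$ is identified with $\mathbb{R}^4$ via $(z,w)\leftrightarrow(\mathrm{Re}\,z,\mathrm{Im}\,z,\mathrm{Re}\,w,\mathrm{Im}\,w)$. *)

(* Defs.v *)
From Stdlib Require Import Reals.
From Coquelicot Require Import Coquelicot.
Open Scope R_scope.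

(* R^4, identified with C^2 via (z,w) <-> (Re z, Im z, Re w, Im w). *)
Definition R4 : Type := (R * R * R * R)%type.

Definition pt4 (x1 x2 x3 x4 : R) : R4 := (x1, x2, x3, x4).

Definition DCmap (a z : C) : R4 :=
  let w := (a * z + / z)%C in pt4 (fst z) (snd z) (fst w) (snd w).

Definition on_DC (a : C) (p : R4) : Prop :=
  exists z : C, z <> 0%C /\ p = DCmap a z.

Definition aff (p u v : R4) (s t : R) : R4 :=
  match p, u, v with
  | (p1, p2, p3, p4), (u1, u2, u3, u4), (v1, v2, v3, v4) =>
      pt4 (p1 + s * u1 + t * v1) (p2 + s * u2 + t * v2)
          (p3 + s * u3 + t * v3) (p4 + s * u4 + t * v4)
  end.

Definition lin_indep (u v : R4) : Prop :=
  forall s t : R, aff (pt4 0 0 0 0) u v s t = pt4 0 0 0 0 -> s = 0 /\ t = 0.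

Definition in_affine_2plane (S : R4 -> Prop) : Prop :=
  exists p u v : R4, lin_indep u v /\
    forall q, S q -> exists s t : R, q = aff p u v s t.

Definition smooth (f : R -> R) : Prop := forall (n : nat) (x : R), ex_derive_n f n x.

Definition smooth_simple_closed_curve (S : R4 -> Prop) : Prop :=
  exists (g1 g2 g3 g4 : R -> R) (T : R),
    0 < T /\
    smooth g1 /\ smooth g2 /\ smooth g3 /\ smooth g4 /\
    (forall t, g1 (t + T) = g1 t /\ g2 (t + T) = g2 t /\
               g3 (t + T) = g3 t /\ g4 (t + T) = g4 t) /\
    (forall t, Derive g1 t <> 0 \/ Derive g2 t <> 0 \/
               Derive g3 t <> 0 \/ Derive g4 t <> 0) /\
    (forall s t, 0 <= s < T -> 0 <= t < T ->
       pt4 (g1 s) (g2 s) (g3 s) (g4 s) = pt4 (g1 t) (g2 t) (g3 t) (g4 t) -> s = t) /\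
    (forall q, S q <-> exists t, q = pt4 (g1 t) (g2 t) (g3 t) (g4 t)).

Definition circle_image (a : C) (r : R) (q : R4) : Prop :=
  exists theta : R, 0 <= theta <= 2 * PI /\
    q = DCmap a (r * cos theta, r * sin theta)%R.

(* Main.v *)
Require Import Defs.
From Stdlib Require Import Reals Lra Lia ZArith Classical.
From Coquelicot Require Import Coquelicot.
Open Scope R_scope.

Lemma ivt_open (f : R -> R) (x y v : R) : continuity f -> x < y ->
  (f x < v < f y \/ f y < v < f x) -> exists s, x < s < y /\ f s = v.
Proof.
  intros Hc Hxy Hv.
  destruct (IVT_gen f x y v Hc) as [s [Hs Hfs]].
  - unfold Rmin, Rmax; destruct (Rle_dec (f x) (f y)); lra.
  - rewrite Rmin_left in Hs by lra. rewrite Rmax_right in Hs by lra.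
    exists s; split; [|exact Hfs].
    destruct (Req_dec s x) as [->|]; [lra|].
    destruct (Req_dec s y) as [->|]; [lra|]. lra.
Qed.

Lemma two_cross (f : R -> R) T t1 v : continuity f -> 0 < t1 < T -> f T = f 0 ->
  (f 0 < v < f t1 \/ f t1 < v < f 0) ->
  exists s1 s2, 0 < s1 < t1 /\ t1 < s2 < T /\ f s1 = v /\ f s2 = v.
Proof.
  intros Hc Ht HT Hv.
  destruct (ivt_open f 0 t1 v Hc) as [s1 [H1 H1']]; [lra|lra|].
  destruct (ivt_open f t1 T v Hc) as [s2 [H2 H2']]; [lra|rewrite HT; lra|].
  exists s1, s2; repeat split; lra.
Qed.

Lemma no_inj (f : R -> R) T : continuity f -> 0 < T -> f T = f 0 ->
  (forall s t, 0 <= s < T -> 0 <= t < T -> f s = f t -> s = t) -> False.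
Proof.
  intros Hc HT Hp Hi.
  assert (Hne : f (T/2) <> f 0) by (intro E; apply Hi in E; lra).
  destruct (two_cross f T (T/2) ((f 0 + f (T/2))/2) Hc) as [s1 [s2 [A [B [C D]]]]];
    [lra|auto|destruct (Rlt_dec (f 0) (f (T/2))); [left|right]; lra|].
  assert (s1 = s2) by (apply Hi; lra). lra.
Qed.

Lemma period_Z (X : Type) (f : R -> X) T : (forall t, f (t + T) = f t) ->
  forall (n : Z) x, f (x + IZR n * T) = f x.
Proof.
  intros Hp.
  assert (Hn : forall (n : nat) x, f (x + INR n * T) = f x).
  { induction n; intros x. simpl. f_equal; ring.
    rewrite S_INR. replace (x + (INR n + 1) * T) with ((x + INR n * T) + T) by ring.
    rewrite Hp. apply IHn. }
  intros n x. destruct n as [|p|p].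
  - simpl; f_equal; ring.
  - rewrite <- positive_nat_Z, <- INR_IZR_INZ. apply Hn.
  - rewrite <- (Hn (Pos.to_nat p) (x + IZR (Z.neg p) * T)). f_equal.
    rewrite INR_IZR_INZ, positive_nat_Z. rewrite <- Pos2Z.opp_pos, opp_IZR. ring.
Qed.

Lemma period_reduce (X : Type) (f : R -> X) T : 0 < T -> (forall t, f (t + T) = f t) ->
  forall t, exists t', 0 <= t' < T /\ f t = f t'.
Proof.
  intros HT Hp t.
  destruct (base_Int_part (t / T)) as [H1 H2].
  set (n := Int_part (t / T)) in *.
  exists (t - IZR n * T). split.
  - assert (IZR n * T <= t / T * T) by (apply Rmult_le_compat_r; lra).
    assert (t / T * T - T < IZR n * T) by (replace (t/T*T - T) with ((t/T - 1)*T) by ring;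
      apply Rmult_lt_compat_r; lra).
    replace (t / T * T) with t in * by (field; lra). lra.
  - rewrite <- (period_Z X f T Hp n (t - IZR n * T)). f_equal; ring.
Qed.
Definition Qf (a1 a2 u1 u2 u3 u4 v1 v2 v3 v4 k : R) :=
  (a1*u1 - a2*u2 + k*u1 - u3) * (a1*v2 + a2*v1 - k*v2 - v4)
  - (a1*u2 + a2*u1 - k*u2 - u4) * (a1*v1 - a2*v2 + k*v1 - v3).

Lemma pe a1 a2 u1 u2 u3 u4 v1 v2 v3 v4 p1 p2 p3 p4 x y x' y' s t s' t' k :
  x = p1 + s*u1 + t*v1 -> y = p2 + s*u2 + t*v2 ->
  a1*x - a2*y + x*k = p3 + s*u3 + t*v3 -> a1*y + a2*x - y*k = p4 + s*u4 + t*v4 ->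
  x' = p1 + s'*u1 + t'*v1 -> y' = p2 + s'*u2 + t'*v2 ->
  a1*x' - a2*y' + x'*k = p3 + s'*u3 + t'*v3 -> a1*y' + a2*x' - y'*k = p4 + s'*u4 + t'*v4 ->
  Qf a1 a2 u1 u2 u3 u4 v1 v2 v3 v4 k <> 0 -> x = x' /\ y = y'.
Proof.
  intros H1 H2 H3 H4 H1' H2' H3' H4' HQ.
  subst x y x' y'.
  set (X1 := a1*u1 - a2*u2 + k*u1 - u3). set (Y1 := a1*v1 - a2*v2 + k*v1 - v3).
  set (X2 := a1*u2 + a2*u1 - k*u2 - u4). set (Y2 := a1*v2 + a2*v1 - k*v2 - v4).
  assert (E1 : (s - s')*X1 + (t - t')*Y1 = 0) by (unfold X1, Y1; lra).
  assert (E2 : (s - s')*X2 + (t - t')*Y2 = 0) by (unfold X2, Y2; lra).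
  assert (HQ' : X1*Y2 - X2*Y1 <> 0) by exact HQ.
  assert (Es : (s - s') * (X1*Y2 - X2*Y1) = 0).
  { replace ((s - s') * (X1*Y2 - X2*Y1)) with (Y2*((s - s')*X1 + (t - t')*Y1) - Y1*((s - s')*X2 + (t - t')*Y2)) by ring.
    rewrite E1, E2; ring. }
  assert (Et : (t - t') * (X1*Y2 - X2*Y1) = 0).
  { replace ((t - t') * (X1*Y2 - X2*Y1)) with (X1*((s - s')*X2 + (t - t')*Y2) - X2*((s - s')*X1 + (t - t')*Y1)) by ring.
    rewrite E1, E2; ring. }
  apply Rmult_integral in Es; apply Rmult_integral in Et.
  destruct Es as [Es|Es]; [|contradiction]. destruct Et as [Et|Et]; [|contradiction].
  assert (s = s') by lra. assert (t = t') by lra. subst. split; ring.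
Qed.

Lemma Qf_quad a1 a2 u1 u2 u3 u4 v1 v2 v3 v4 k1 k2 k3 :
  Qf a1 a2 u1 u2 u3 u4 v1 v2 v3 v4 k1 = 0 ->
  Qf a1 a2 u1 u2 u3 u4 v1 v2 v3 v4 k2 = 0 ->
  Qf a1 a2 u1 u2 u3 u4 v1 v2 v3 v4 k3 = 0 ->
  k1 <> k2 -> k2 <> k3 -> k1 <> k3 -> u1*v2 - u2*v1 = 0.
Proof.
  intros Q1 Q2 Q3 D12 D23 D13.
  assert (E : Qf a1 a2 u1 u2 u3 u4 v1 v2 v3 v4 k1 * (k2 - k3)
     - Qf a1 a2 u1 u2 u3 u4 v1 v2 v3 v4 k2 * (k1 - k3)
     + Qf a1 a2 u1 u2 u3 u4 v1 v2 v3 v4 k3 * (k1 - k2)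
     = - (u1*v2 - u2*v1) * ((k1 - k2) * ((k2 - k3) * (k1 - k3)))) by (unfold Qf; ring).
  rewrite Q1, Q2, Q3 in E.
  assert (P : (k1 - k2) * ((k2 - k3) * (k1 - k3)) <> 0).
  { repeat apply Rmult_integral_contrapositive_currified; lra. }
  assert (Z : (u1*v2 - u2*v1) * ((k1 - k2) * ((k2 - k3) * (k1 - k3))) = 0) by lra.
  apply Rmult_integral in Z; destruct Z; [auto|contradiction].
Qed.

Lemma degen_choose u1 u2 v1 v2 : u1*v2 - u2*v1 = 0 -> exists e1 e2,
  forall a b d1 d2, d1 = a*u1 + b*v1 -> d2 = a*u2 + b*v2 -> e1*d1 + e2*d2 = 0 -> d1 = 0 /\ d2 = 0.
Proof.
  intros Hd.
  destruct (Req_dec (u1*u1 + u2*u2) 0) as [Hu|Hu].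
  - assert (u1 = 0) by nra. assert (u2 = 0) by nra. subst.
    exists v1, v2. intros a b d1 d2 E1 E2 E.
    destruct (Req_dec (v1*v1+v2*v2) 0) as [Hv|Hv].
    + assert (v1 = 0) by nra. assert (v2 = 0) by nra. subst. split; ring.
    + assert (b * (v1*v1+v2*v2) = 0) by (subst; nra).
      apply Rmult_integral in H; destruct H as [H|H]; [|contradiction]. subst; split; ring.
  - exists u1, u2. intros a b d1 d2 E1 E2 E.
    assert (F1 : d1*(u1*u1+u2*u2) = u1*(u1*d1 + u2*d2) + b*u2*(u2*v1 - u1*v2)) by (subst; ring).
    assert (F2 : d2*(u1*u1+u2*u2) = u2*(u1*d1 + u2*d2) + b*u1*(u1*v2 - u2*v1)) by (subst; ring).
    rewrite E in F1, F2. split.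
    + apply (Rmult_eq_reg_r (u1*u1+u2*u2)); auto. rewrite F1. replace (u2*v1 - u1*v2) with (-(u1*v2-u2*v1)) by ring; rewrite Hd; ring.
    + apply (Rmult_eq_reg_r (u1*u1+u2*u2)); auto. rewrite F2, Hd; ring.
Qed.

Lemma stereo r X1 Y1 X2 Y2 : X1^2 + Y1^2 = r^2 -> X2^2 + Y2^2 = r^2 -> X1 <> r -> X2 <> r ->
  Y1 / (r - X1) = Y2 / (r - X2) -> X1 = X2 /\ Y1 = Y2.
Proof.
  intros C1 C2 N1 N2 E.
  set (m := Y1 / (r - X1)) in *.
  assert (R1 : Y1 = m * (r - X1)) by (unfold m; field; lra).
  assert (R2 : Y2 = m * (r - X2)) by (rewrite E; field; lra).
  assert (S1 : r + X1 = m^2 * (r - X1)).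
  { apply (Rmult_eq_reg_l (r - X1)); [|lra].
    replace ((r - X1) * (r + X1)) with (r^2 - X1^2) by ring. rewrite <- C1, R1. ring. }
  assert (S2 : r + X2 = m^2 * (r - X2)).
  { apply (Rmult_eq_reg_l (r - X2)); [|lra].
    replace ((r - X2) * (r + X2)) with (r^2 - X2^2) by ring. rewrite <- C2, R2. ring. }
  assert (X1 = X2).
  { apply (Rmult_eq_reg_l (1 + m^2)); [|nra]. nra. }
  split; auto. rewrite R1, R2, H; ring.
Qed.

Lemma smooth_ex g : smooth g -> forall x, ex_derive g x.
Proof. intros H x. apply (ex_derive_ext (Derive_n g 0)); [reflexivity|]. exact (H 1%nat x). Qed.
Lemma cont_of_ex (f : R -> R) : (forall x, ex_derive f x) -> continuity f.
Proof. intros H x. apply continuity_pt_filterlim. exact (ex_derive_continuous f x (H x)). Qed.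

Lemma const_mod (a1 a2 : R) (g1 g2 g3 g4 : R -> R) T p1 p2 p3 p4 u1 u2 u3 u4 v1 v2 v3 v4 :
  0 < T -> (forall x, ex_derive g1 x) -> (forall x, ex_derive g2 x) ->
  (forall t, g1 (t+T) = g1 t /\ g2 (t+T) = g2 t) ->
  (forall t, g1 t ^2 + g2 t ^2 <> 0 /\
     g3 t = a1*g1 t - a2*g2 t + g1 t * /(g1 t^2 + g2 t^2) /\
     g4 t = a1*g2 t + a2*g1 t - g2 t * /(g1 t^2 + g2 t^2)) ->
  (forall s t, 0 <= s < T -> 0 <= t < T -> g1 s = g1 t -> g2 s = g2 t -> s = t) ->
  (forall t, exists s' t', g1 t = p1 + s'*u1 + t'*v1 /\ g2 t = p2 + s'*u2 + t'*v2 /\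
                g3 t = p3 + s'*u3 + t'*v3 /\ g4 t = p4 + s'*u4 + t'*v4) ->
  forall t, g1 t^2 + g2 t^2 = g1 0^2 + g2 0^2.
Proof.
  intros HT Hd1 Hd2 Hper Hdc Hinj Hpl.
  destruct (Req_dec (u1*v2 - u2*v1) 0) as [Hdz|Hdz].
  - exfalso. destruct (degen_choose _ _ _ _ Hdz) as [e1 [e2 He]].
    apply (no_inj (fun t => e1*g1 t + e2*g2 t) T).
    + apply cont_of_ex; intro x; auto_derive; repeat split; auto.
    + lra.
    + destruct (Hper 0) as [P1 P2]. rewrite Rplus_0_l in P1, P2. rewrite P1, P2; reflexivity.
    + intros s t Hs Ht E. apply Hinj; auto.
      * destruct (Hpl s) as [σ [τ [A1 [A2 _]]]]. destruct (Hpl t) as [σ' [τ' [B1 [B2 _]]]].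
        destruct (He (σ-σ') (τ-τ') (g1 s - g1 t) (g2 s - g2 t)) as [D1 D2].
        { rewrite A1, B1; ring. } { rewrite A2, B2; ring. } { lra. } lra.
      * destruct (Hpl s) as [σ [τ [A1 [A2 _]]]]. destruct (Hpl t) as [σ' [τ' [B1 [B2 _]]]].
        destruct (He (σ-σ') (τ-τ') (g1 s - g1 t) (g2 s - g2 t)) as [D1 D2].
        { rewrite A1, B1; ring. } { rewrite A2, B2; ring. } { lra. } lra.
  - intro t0. apply NNPP; intro Hne.
    destruct (period_reduce _ (fun t => (g1 t, g2 t)) T HT) with (t := t0) as [t1 [Ht1 Et1]].
    { intro t; destruct (Hper t) as [P1 P2]; rewrite P1, P2; reflexivity. }
    injection Et1 as E1 E2. rewrite E1, E2 in Hne.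
    set (k := fun t => / (g1 t^2 + g2 t^2)).
    assert (Hk : continuity k).
    { apply cont_of_ex; intro x; unfold k; auto_derive; repeat split; auto. apply Hdc. }
    assert (Hkp : k T = k 0).
    { destruct (Hper 0) as [P1 P2]. rewrite Rplus_0_l in P1, P2. unfold k; rewrite P1, P2; reflexivity. }
    assert (Ht10 : t1 <> 0) by (intro; subst; apply Hne; reflexivity).
    assert (Hkne : k t1 <> k 0).
    { intro E. apply Hne. unfold k in E.
      rewrite <- (Rinv_inv (g1 t1 ^ 2 + g2 t1 ^ 2)), E, Rinv_inv. reflexivity. }
    assert (Claim : forall v, (k 0 < v < k t1 \/ k t1 < v < k 0) ->
               Qf a1 a2 u1 u2 u3 u4 v1 v2 v3 v4 v = 0).
    { intros v Hv. apply NNPP; intro HQ.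
      destruct (two_cross k T t1 v Hk) as [s1 [s2 [S1 [S2 [K1 K2]]]]]; [lra|auto|auto|].
      destruct (Hpl s1) as [σ [τ [A1 [A2 [A3 A4]]]]].
      destruct (Hpl s2) as [σ' [τ' [B1 [B2 [B3 B4]]]]].
      destruct (Hdc s1) as [_ [C3 C4]]. destruct (Hdc s2) as [_ [D3 D4]].
      fold (k s1) in C3, C4. fold (k s2) in D3, D4. rewrite K1 in C3, C4. rewrite K2 in D3, D4.
      destruct (pe a1 a2 u1 u2 u3 u4 v1 v2 v3 v4 p1 p2 p3 p4 (g1 s1) (g2 s1) (g1 s2) (g2 s2)
                  σ τ σ' τ' v) as [F1 F2]; auto.
      { rewrite <- C3; auto. } { rewrite <- C4; auto. }
      { rewrite <- D3; auto. } { rewrite <- D4; auto. }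
      assert (s1 = s2) by (apply Hinj; auto; lra). lra. }
    apply Hdz.
    apply (Qf_quad a1 a2 u1 u2 u3 u4 v1 v2 v3 v4 (k 0 + (k t1 - k 0)/4) (k 0 + 2*(k t1 - k 0)/4)
             (k 0 + 3*(k t1 - k 0)/4));
      try (apply Claim; destruct (Rlt_dec (k 0) (k t1)); [left|right]; lra);
      intro; apply Hkne; lra.
Qed.

Lemma surj (g1 g2 : R -> R) T R0 : 0 < T -> (forall x, ex_derive g1 x) -> (forall x, ex_derive g2 x) ->
  (forall t, g1 (t+T) = g1 t /\ g2 (t+T) = g2 t) ->
  (forall s t, 0 <= s < T -> 0 <= t < T -> g1 s = g1 t -> g2 s = g2 t -> s = t) ->
  (forall t, g1 t^2 + g2 t^2 = R0) -> 0 < R0 ->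
  forall c s, c^2 + s^2 = 1 -> exists t, g1 t = sqrt R0 * c /\ g2 t = sqrt R0 * s.
Proof.
  intros HT Hd1 Hd2 Hper Hinj Hmod HR c s Hcs.
  apply NNPP; intro Hno.
  set (r := sqrt R0).
  assert (Hr2 : r^2 = R0) by (unfold r; simpl; rewrite Rmult_1_r; apply sqrt_sqrt; lra).
  set (X := fun t => g1 t * c + g2 t * s).
  set (Y := fun t => - g1 t * s + g2 t * c).
  assert (HXY : forall t, X t ^2 + Y t ^2 = r^2).
  { intro t. rewrite Hr2, <- (Hmod t). unfold X, Y.
    replace (g1 t ^2 + g2 t ^2) with ((g1 t ^2 + g2 t ^2) * (c^2+s^2)) by (rewrite Hcs; ring). ring. }
  assert (Hg1 : forall t, g1 t = X t * c - Y t * s).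
  { intro t; unfold X, Y; cbv beta. apply Rminus_diag_uniq.
    replace (g1 t - ((g1 t * c + g2 t * s) * c - (- g1 t * s + g2 t * c) * s)) with (g1 t * (1 - (c^2+s^2))) by ring.
    rewrite Hcs; ring. }
  assert (Hg2 : forall t, g2 t = X t * s + Y t * c).
  { intro t; unfold X, Y; cbv beta. apply Rminus_diag_uniq.
    replace (g2 t - ((g1 t * c + g2 t * s) * s + (- g1 t * s + g2 t * c) * c)) with (g2 t * (1 - (c^2+s^2))) by ring.
    rewrite Hcs; ring. }
  assert (HXr : forall t, r - X t <> 0).
  { intros t E. apply Hno. exists t.
    assert (Y t = 0). { assert (Y t ^2 = 0) by (specialize (HXY t); assert (X t = r) by lra; rewrite H in HXY; lra). nra. }
    rewrite Hg1, Hg2, H. assert (X t = r) by lra. rewrite H0. unfold r; split; ring. }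
  apply (no_inj (fun t => Y t / (r - X t)) T).
  - apply cont_of_ex; intro x; unfold X, Y; auto_derive; repeat split; auto.
    intro E; apply (HXr x); unfold X; lra.
  - lra.
  - destruct (Hper 0) as [P1 P2]. rewrite Rplus_0_l in P1, P2. unfold X, Y; rewrite P1, P2; reflexivity.
  - intros t1 t2 H1 H2 E.
    destruct (stereo r (X t1) (Y t1) (X t2) (Y t2)) as [F1 F2]; auto.
    + intro; apply (HXr t1); lra.
    + intro; apply (HXr t2); lra.
    + apply Hinj; auto. rewrite Hg1, (Hg1 t2), F1, F2; reflexivity.
      rewrite Hg2, (Hg2 t2), F1, F2; reflexivity.
Qed.

Lemma cs1 x : cos x ^2 + sin x ^2 = 1.
Proof. pose proof (sin2_cos2 x). unfold Rsqr in H. simpl. lra. Qed.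

Lemma trig_derive A B x : is_derive (fun t => A*cos t + B*sin t) x (B*cos x + (-A)*sin x).
Proof. auto_derive; auto. ring. Qed.

Lemma trig_Dn n : forall A B, exists A' B', forall t,
  Derive_n (fun t => A*cos t + B*sin t) n t = A'*cos t + B'*sin t.
Proof.
  induction n; intros A B.
  - exists A, B; intro t; reflexivity.
  - destruct (IHn A B) as [A' [B' H]]. exists B', (-A'). intro t. simpl.
    rewrite (Derive_ext _ _ _ H). apply is_derive_unique, trig_derive.
Qed.

Lemma trig_smooth A B : smooth (fun t => A*cos t + B*sin t).
Proof.
  intros n x. destruct n; [exact I|]. simpl.
  destruct (trig_Dn n A B) as [A' [B' H]].
  apply (ex_derive_ext (fun t => A'*cos t + B'*sin t)); [intro; symmetry; apply H|].
  eexists; apply trig_derive.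
Qed.

Lemma trig_periodic A B t : A*cos (t + 2*PI) + B*sin (t + 2*PI) = A*cos t + B*sin t.
Proof. rewrite cos_plus, sin_plus, cos_2PI, sin_2PI. ring. Qed.

Lemma cos_sin_inj s t : 0 <= s < 2*PI -> 0 <= t < 2*PI -> cos s = cos t -> sin s = sin t -> s = t.
Proof.
  intros Hs Ht Hc Hsn.
  assert (S0 : sin (s - t) = 0) by (rewrite sin_minus, Hc, Hsn; ring).
  assert (C1 : cos (s - t) = 1) by (rewrite cos_minus, Hc, Hsn; pose proof (cs1 t); simpl in *; lra).
  destruct (sin_eq_0_0 _ S0) as [k Hk].
  pose proof PI_RGT_0.
  assert (IZR k < 2) by (apply (Rmult_lt_reg_r PI); lra).
  assert (-2 < IZR k) by (apply (Rmult_lt_reg_r PI); lra).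
  apply lt_IZR in H0. apply lt_IZR in H1.
  assert (k = (-1)%Z \/ k = 0%Z \/ k = 1%Z) by lia.
  destruct H2 as [E|[E|E]]; subst k.
  - rewrite Hk in C1. replace (IZR (-1) * PI) with (- PI) in C1 by (simpl; ring).
    rewrite cos_neg, cos_PI in C1. lra.
  - simpl in Hk. lra.
  - rewrite Hk in C1. replace (IZR 1 * PI) with PI in C1 by (simpl; ring). rewrite cos_PI in C1; lra.
Qed.

Lemma polar x y r : 0 < r -> x^2 + y^2 = r^2 ->
  exists th, 0 <= th <= 2*PI /\ x = r * cos th /\ y = r * sin th.
Proof.
  intros Hr Hxy.
  set (c := x / r).
  assert (Hc2 : c^2 + (y/r)^2 = 1) by (unfold c; field_simplify; [rewrite Hxy; field|]; lra).
  assert (Hc : -1 <= c <= 1) by nra.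
  assert (Hsq : sqrt (1 - c²) = Rabs (y / r)).
  { rewrite <- sqrt_Rsqr_abs. f_equal. unfold Rsqr. simpl in Hc2. lra. }
  pose proof (acos_bound c). pose proof PI_RGT_0.
  destruct (Rle_dec 0 y) as [Hy|Hy].
  - exists (acos c). split; [lra|]. split.
    + rewrite cos_acos by lra. unfold c; field; lra.
    + rewrite sin_acos, Hsq by lra. rewrite Rabs_pos_eq. field; lra.
      unfold Rdiv; apply Rmult_le_pos; [lra| left; apply Rinv_0_lt_compat; lra].
  - exists (2*PI - acos c). split; [lra|]. split.
    + rewrite cos_minus, cos_2PI, sin_2PI, cos_acos by lra. unfold c; field; lra.
    + rewrite sin_minus, cos_2PI, sin_2PI, sin_acos, Hsq by lra.
      rewrite Rabs_left. field; lra.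
      assert (0 < /r) by (apply Rinv_0_lt_compat; lra). unfold Rdiv; nra.
Qed.

Lemma DC_expand a1 a2 x y : DCmap (a1, a2) (x, y) =
  pt4 x y (a1*x - a2*y + x * /(x^2+y^2)) (a1*y + a2*x - y * /(x^2+y^2)).
Proof. unfold DCmap, pt4, Cplus, Cmult, Cinv; simpl. unfold Rdiv. apply f_equal2; [apply f_equal2; [reflexivity|ring]|ring]. Qed.

Lemma onDC_pt a1 a2 x1 x2 x3 x4 : on_DC (a1, a2) (pt4 x1 x2 x3 x4) ->
  x1^2 + x2^2 <> 0 /\ x3 = a1*x1 - a2*x2 + x1 * /(x1^2+x2^2) /\
  x4 = a1*x2 + a2*x1 - x2 * /(x1^2+x2^2).
Proof.
  intros [[z1 z2] [Hz E]]. rewrite DC_expand in E. unfold pt4 in E.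
  injection E as E1 E2 E3 E4. subst. split; [|split; auto].
  intro H. apply Hz. assert (z1 = 0) by nra. assert (z2 = 0) by nra. subst; reflexivity.
Qed.

Theorem lemma2p1 (a : C) (S : R4 -> Prop) :
  (smooth_simple_closed_curve S /\ (forall q, S q -> on_DC a q) /\ in_affine_2plane S)
  <-> (exists r : R, 0 < r /\ forall q, S q <-> circle_image a r q).
Proof.
  destruct a as [a1 a2]. split.
  - intros [[g1 [g2 [g3 [g4 [T [HT [s1 [s2 [s3 [s4 [Hper [Hreg [Hinj HS]]]]]]]]]]]]] [HDC [p [u [v [_ Hpl]]]]]].
    destruct p as [[[p1 p2] p3] p4]. destruct u as [[[u1 u2] u3] u4]. destruct v as [[[v1 v2] v3] v4].
    assert (HSt : forall t, S (pt4 (g1 t) (g2 t) (g3 t) (g4 t))) by (intro t; apply HS; exists t; reflexivity).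
    assert (Hdc : forall t, g1 t ^2 + g2 t ^2 <> 0 /\
       g3 t = a1*g1 t - a2*g2 t + g1 t * /(g1 t^2 + g2 t^2) /\
       g4 t = a1*g2 t + a2*g1 t - g2 t * /(g1 t^2 + g2 t^2)).
    { intro t. apply onDC_pt, HDC, HSt. }
    assert (Hpt : forall t, pt4 (g1 t) (g2 t) (g3 t) (g4 t) = DCmap (a1, a2) (g1 t, g2 t)).
    { intro t. rewrite DC_expand. destruct (Hdc t) as [_ [E3 E4]]. rewrite E3, E4; reflexivity. }
    assert (Hinj' : forall s t, 0 <= s < T -> 0 <= t < T -> g1 s = g1 t -> g2 s = g2 t -> s = t).
    { intros s t Hs Ht E1 E2. apply Hinj; auto. rewrite Hpt, Hpt, E1, E2; reflexivity. }
    assert (Hpl' : forall t, exists s' t', g1 t = p1 + s'*u1 + t'*v1 /\ g2 t = p2 + s'*u2 + t'*v2 /\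
                g3 t = p3 + s'*u3 + t'*v3 /\ g4 t = p4 + s'*u4 + t'*v4).
    { intro t. destruct (Hpl _ (HSt t)) as [σ [τ E]]. exists σ, τ.
      unfold aff, pt4 in E. injection E as E1 E2 E3 E4. repeat split; assumption. }
    assert (Hper' : forall t, g1 (t+T) = g1 t /\ g2 (t+T) = g2 t) by (intro t; destruct (Hper t) as [A [B _]]; auto).
    assert (Hd1 := smooth_ex g1 s1). assert (Hd2 := smooth_ex g2 s2).
    pose proof (const_mod a1 a2 g1 g2 g3 g4 T p1 p2 p3 p4 u1 u2 u3 u4 v1 v2 v3 v4 HT Hd1 Hd2 Hper' Hdc Hinj' Hpl') as Hmod.
    set (R0 := g1 0^2 + g2 0^2) in Hmod.
    assert (HR0 : 0 < R0) by (destruct (Hdc 0) as [N _]; unfold R0 in *; nra).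
    assert (Hr2 : sqrt R0 ^ 2 = R0) by (simpl; rewrite Rmult_1_r; apply sqrt_sqrt; lra).
    exists (sqrt R0). split; [apply sqrt_lt_R0; auto|].
    intro q. split.
    + intro Hq. apply HS in Hq. destruct Hq as [t ->].
      destruct (polar (g1 t) (g2 t) (sqrt R0)) as [th [Hth [E1 E2]]].
      { apply sqrt_lt_R0; auto. } { rewrite Hr2; apply Hmod. }
      exists th. split; auto. rewrite Hpt, <- E1, <- E2. reflexivity.
    + intros [th [Hth ->]].
      destruct (surj g1 g2 T R0 HT Hd1 Hd2 Hper' Hinj' Hmod HR0 (cos th) (sin th) (cs1 th)) as [t [E1 E2]].
      apply HS. exists t. rewrite Hpt, E1, E2. reflexivity.
  - intros [r [Hr HS]].
    set (g1 := fun t => r*cos t + 0*sin t).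
    set (g2 := fun t => 0*cos t + r*sin t).
    set (g3 := fun t => (a1*r + /r)*cos t + (-(a2*r))*sin t).
    set (g4 := fun t => (a2*r)*cos t + (a1*r - /r)*sin t).
    assert (Hc : forall t, DCmap (a1, a2) (r * cos t, r * sin t) = pt4 (g1 t) (g2 t) (g3 t) (g4 t)).
    { intro t. rewrite DC_expand. unfold g1, g2, g3, g4.
      replace ((r * cos t)^2 + (r * sin t)^2) with (r^2) by (pose proof (cs1 t); nra).
      unfold pt4. f_equal; [f_equal; [f_equal|]|]; field; lra. }
    assert (Hpi := PI_RGT_0).
    split; [|split].
    + exists g1, g2, g3, g4, (2*PI). split; [lra|].
      split; [apply trig_smooth|]. split; [apply trig_smooth|].
      split; [apply trig_smooth|]. split; [apply trig_smooth|].
      split. { intro t; unfold g1, g2, g3, g4; rewrite !trig_periodic; repeat split. }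
      split.
      { intro t. rewrite (is_derive_unique g1 t _ (trig_derive r 0 t)).
        rewrite (is_derive_unique g2 t _ (trig_derive 0 r t)).
        pose proof (cs1 t).
        destruct (Req_dec (sin t) 0) as [E|E].
        - right; left. intro F. assert (cos t = 0) by nra. nra.
        - left. intro F. assert (sin t = 0) by nra. contradiction. }
      split.
      { intros s t Hs Ht E. unfold pt4, g1, g2 in E. injection E as E1 E2 _ _.
        apply cos_sin_inj; auto.
        - apply (Rmult_eq_reg_l r); lra.
        - apply (Rmult_eq_reg_l r); lra. }
      intro q. rewrite HS. split.
      * intros [th [_ ->]]. exists th. apply Hc.
      * intros [t ->].
        destruct (period_reduce _ (fun t => pt4 (g1 t) (g2 t) (g3 t) (g4 t)) (2*PI)) with (t := t)
          as [t' [Ht' E]]; [lra| |].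
        { intro x; unfold g1, g2, g3, g4; rewrite !trig_periodic; reflexivity. }
        exists t'. split; [lra|]. rewrite Hc. exact E.
    + intros q Hq. apply HS in Hq. destruct Hq as [th [_ ->]].
      exists (r * cos th, r * sin th). split; auto.
      intro E. injection E as E1 E2. pose proof (cs1 th).
      assert (cos th = 0) by (apply (Rmult_eq_reg_l r); lra).
      assert (sin th = 0) by (apply (Rmult_eq_reg_l r); lra). nra.
    + exists (pt4 0 0 0 0), (pt4 r 0 (a1*r + /r) (a2*r)), (pt4 0 r (-(a2*r)) (a1*r - /r)).
      split.
      * intros s t E. unfold aff, pt4 in E. injection E as E1 E2 _ _.
        split; apply (Rmult_eq_reg_l r); lra.
      * intros q Hq. apply HS in Hq. destruct Hq as [th [_ ->]].
        exists (cos th), (sin th). rewrite Hc. unfold aff, pt4, g1, g2, g3, g4.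
        f_equal; [f_equal; [f_equal|]|]; ring.
Qed.
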